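(* Let $G_1$ and $G_2$ be graphs, where $G_i$ has order $n_i$, minimum degree $\delta_i$, maximum degree $\Delta_i$ and independence number $\alpha(G_i)$, $i\in\{1,2\}$. Then for every integer $k\in\{1-\delta_1-\delta_2,\dots,\Delta_1+\Delta_2\}$, $$\phi_k^d(G_1\times G_2)\ge \alpha(G_1)\alpha(G_2)+\min\{n_1-\alpha(G_1),\,n_2-\alpha(G_2)\}.$$
   Context: All graphs are finite and simple. For a graph $G=(V,E)$, a set $S\subseteq V$ and $v\in V$, let $\delta_S(v)=|\{u\in S: uv\in E\}|$, $\delta(v)$ the degree of $v$, and $\overline{S}=V\setminus S$. For an integer $k$, a non-empty set $S\subseteq V$ is a defensive $k$-alliance if $\delta_S(v)\ge \delta_{\overline S}(v)+k$ for every $v\in S$. A set $X\subseteq V$ is a defensive $k$-alliance free set ($k$-daf set) if no defensive $k$-alliance $S$ satisfies $S\subseteq X$. $\phi_k^d(G)$ denotes the maximum cardinality of a $k$-daf set in $G$. The Cartesian product $G_1\times G_2$ of $G_1=(V_1,E_1)$, $G_2=(V_2,E_2)$ has vertex set $V_1\times V_2$, with $(a,b)$ adjacent to $(c,d)$ iff either $a=c$ and $bd\in E_2$, or $b=d$ and $ac\in E_1$. *)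

(* Defs.v *)
From HB Require Import structures.
From mathcomp Require Import all_boot all_order all_algebra.
Set Implicit Arguments. Unset Strict Implicit. Unset Printing Implicit Defensive.
Import Order.TTheory GRing.Theory Num.Theory.

Definition simple_graph (T : finType) (e : rel T) : Prop :=
  symmetric e /\ irreflexive e.

Definition deg_in (T : finType) (e : rel T) (S : {set T}) (v : T) : nat :=
  #|[set u in S | e v u]|.

Definition deg (T : finType) (e : rel T) (v : T) : nat := deg_in e setT v.

(* minimum / maximum degree (for an empty vertex set these are #|T| = 0 and 0) *)
Definition min_deg (T : finType) (e : rel T) : nat :=
  \big[minn/#|T|]_(v : T) deg e v.
Definition max_deg (T : finType) (e : rel T) : nat :=
  \max_(v : T) deg e v.

Definition independent (T : finType) (e : rel T) (A : {set T}) : bool :=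
  [forall u in A, forall v in A, ~~ e u v].
Definition alpha (T : finType) (e : rel T) : nat :=
  \max_(A : {set T} | independent e A) #|A|.

Definition def_alliance (T : finType) (e : rel T) (k : int) (S : {set T}) : bool :=
  (S != set0) &&
  [forall v in S, ((deg_in e (~: S) v)%:Z + k <= (deg_in e S v)%:Z)%R].

Definition k_daf (T : finType) (e : rel T) (k : int) (X : {set T}) : bool :=
  [forall S : {set T}, (S \subset X) ==> ~~ def_alliance e k S].

Definition phi_d (T : finType) (e : rel T) (k : int) : nat :=
  \max_(X : {set T} | k_daf e k X) #|X|.

Definition cart_prod (T1 T2 : finType) (e1 : rel T1) (e2 : rel T2) : rel (T1 * T2) :=
  fun x y => ((x.1 == y.1) && e2 x.2 y.2) || ((x.2 == y.2) && e1 x.1 y.1).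

(* Main.v *)
Require Import Defs.
From HB Require Import structures.
From mathcomp Require Import all_boot all_order all_algebra.
From mathcomp Require Import zify.
Import Order.TTheory GRing.Theory Num.Theory.
Set Implicit Arguments. Unset Strict Implicit.

Lemma alpha_att (T : finType) (e : rel T) :
  exists2 A : {set T}, independent e A & #|A| = alpha e.
Proof.
have h0 : 0 < #|independent e|.
  apply/card_gt0P; exists set0; rewrite unfold_in.
  by apply/forallP => u; apply/implyP; rewrite in_set0.
case: (@eq_bigmax_cond _ (independent e) (fun A : {set T} => #|A|) h0) => A HA HE.
by exists A; [exact HA | rewrite /alpha HE].
Qed.

Lemma mindeg_le (T : finType) (e : rel T) v : min_deg e <= deg e v.
Proof.
rewrite /min_deg; have : v \in index_enum T by rewrite mem_index_enum.
elim: (index_enum T) => [//|a r IH]; rewrite inE big_cons /=.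
case/orP => [/eqP -> | /IH H]; first exact: geq_minl.
exact: leq_trans (geq_minr _ _) H.
Qed.

Lemma deg_prod (T1 T2 : finType) (e1 : rel T1) (e2 : rel T2)
  (G1 : simple_graph e1) (G2 : simple_graph e2) (S : {set T1 * T2}) v :
  (forall u, u \in S -> ~~ cart_prod e1 e2 v u) ->
  deg e1 v.1 + deg e2 v.2 <= deg_in (cart_prod e1 e2) (~: S) v.
Proof.
move=> HS.
case: G1 => _ irr1; case: G2 => _ irr2.
set N1 := [set (x, v.2) | x in [set u in setT | e1 v.1 u]].
set N2 := [set (v.1, y) | y in [set u in setT | e2 v.2 u]].
have c1 : #|N1| = deg e1 v.1.
  by rewrite card_imset // => x y [].
have c2 : #|N2| = deg e2 v.2.
  by rewrite card_imset // => x y [].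
have hI : N1 :&: N2 = set0.
  apply/setP => w; rewrite !inE; apply/negP => /andP [/imsetP [x Hx ->] /imsetP [y Hy [E1 E2]]].
  by move: Hx; rewrite !inE -E1 irr1.
rewrite /deg_in -c1 -c2.
have -> : #|N1| + #|N2| = #|N1 :|: N2| by rewrite cardsU hI cards0 subn0.
apply: subset_leq_card; apply/subsetP => w; rewrite !inE.
case/orP => /imsetP [x Hx ->]; move: Hx; rewrite !inE => Hx.
- have ee : cart_prod e1 e2 v (x, v.2) by rewrite /cart_prod /= eqxx Hx orbT.
  rewrite ee andbT; apply/negP => Hin; by move: (HS _ Hin); rewrite ee.
- have ee : cart_prod e1 e2 v (v.1, x) by rewrite /cart_prod /= eqxx Hx.
  rewrite ee andbT; apply/negP => Hin; by move: (HS _ Hin); rewrite ee.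
Qed.

Theorem mainTheorem1 (T1 T2 : finType) (e1 : rel T1) (e2 : rel T2)
  (G1 : simple_graph e1) (G2 : simple_graph e2) (k : int) :
  (1 - (min_deg e1)%:Z - (min_deg e2)%:Z <= k)%R ->
  (k <= (max_deg e1)%:Z + (max_deg e2)%:Z)%R ->
  alpha e1 * alpha e2 + minn (#|T1| - alpha e1) (#|T2| - alpha e2)
    <= phi_d (cart_prod e1 e2) k.
Proof.
move=> hk _.
case: (alpha_att e1) => A1 iA1 cA1.
case: (alpha_att e2) => A2 iA2 cA2.
set m := minn _ _.
have h1 : m <= #|~: A1| by rewrite /m -cA1 -(cardsC A1) addKn geq_minl.
have h2 : m <= #|~: A2| by rewrite /m -cA2 -(cardsC A2) addKn geq_minr.
pose f (i : 'I_m) := enum_val (widen_ord h1 i).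
pose g (i : 'I_m) := enum_val (widen_ord h2 i).
have fC i : f i \notin A1.
  by have := enum_valP (widen_ord h1 i); rewrite inE.
have gC i : g i \notin A2.
  by have := enum_valP (widen_ord h2 i); rewrite inE.
have finj : injective f.
  by move=> i j /enum_val_inj /(congr1 val) /= /val_inj.
have ginj : injective g.
  by move=> i j /enum_val_inj /(congr1 val) /= /val_inj.
pose P := [set (f i, g i) | i : 'I_m].
pose X := setX A1 A2 :|: P.
have cX : #|X| = alpha e1 * alpha e2 + m.
  rewrite cardsU cardsX cA1 cA2 card_imset; last first.
    by move=> i j [] /finj.
  rewrite card_ord.
  suff -> : setX A1 A2 :&: P = set0 by rewrite cards0 subn0.
  apply/setP => w; rewrite !inE; apply/negP => /andP [/andP [w1 _] /imsetP [i _ Ew]].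
  by move: w1; rewrite Ew /= (negbTE (fC i)).
have indep : forall u w, u \in X -> w \in X -> ~~ cart_prod e1 e2 u w.
  case: G1 => _ irr1; case: G2 => _ irr2.
  have nA1 : forall a b, a \in A1 -> b \in A1 -> ~~ e1 a b.
    by move=> a b Ha Hb; move/forallP: iA1 => /(_ a); rewrite Ha /= => /forallP /(_ b); rewrite Hb.
  have nA2 : forall a b, a \in A2 -> b \in A2 -> ~~ e2 a b.
    by move=> a b Ha Hb; move/forallP: iA2 => /(_ a); rewrite Ha /= => /forallP /(_ b); rewrite Hb.
  move=> [u1 u2] [w1 w2]; rewrite !inE /cart_prod /=.
  case/orP => [/andP [hu1 hu2] | /imsetP [i _ [-> ->]]];
  case/orP => [/andP [hw1 hw2] | /imsetP [j _ [-> ->]]].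
  - by rewrite (negbTE (nA2 _ _ hu2 hw2)) (negbTE (nA1 _ _ hu1 hw1)) !andbF.
  - have : u1 != f j by apply: contraNneq (fC j) => <-.
    have : u2 != g j by apply: contraNneq (gC j) => <-.
    by move=> /negbTE -> /negbTE ->.
  - have : f i != w1 by apply: contraNneq (fC i) => ->.
    have : g i != w2 by apply: contraNneq (gC i) => ->.
    by move=> /negbTE -> /negbTE ->.
  - case: (eqVneq i j) => [-> | nij]; first by rewrite irr1 irr2 !andbF.
    have : f i != f j by apply: contra_neq nij => /finj.
    have : g i != g j by apply: contra_neq nij => /ginj.
    by move=> /negbTE -> /negbTE ->.
rewrite -cX /phi_d; apply: (@leq_bigmax_cond _ (k_daf (cart_prod e1 e2) k) (fun X : {set T1 * T2} => #|X|)).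
apply/forallP => S; apply/implyP => sub.
rewrite /def_alliance negb_and; case: (set_0Vmem S) => [-> | [v vS]].
  by rewrite eqxx.
apply/orP; right; rewrite negb_forall; apply/existsP; exists v.
rewrite vS /= -ltNge.
have vX : v \in X by apply: (subsetP sub).
have HS : forall u, u \in S -> ~~ cart_prod e1 e2 v u.
  by move=> u uS; apply: indep => //; apply: (subsetP sub).
have z : deg_in (cart_prod e1 e2) S v = 0.
  apply/eqP; rewrite cards_eq0; apply/eqP/setP => u; rewrite !inE.
  by apply/negP => /andP [uS]; apply/negP; apply: HS.
have hd := deg_prod G1 G2 HS.
have m1 := mindeg_le e1 v.1.
have m2 := mindeg_le e2 v.2.
rewrite z.
have H : (min_deg e1 + min_deg e2 <= deg_in (cart_prod e1 e2) (~: S) v)%N.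
  exact: leq_trans (leq_add m1 m2) hd.
move: H hk; lia.
Qed.
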